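(* Let $G$ be a connected graph with vertices $v_1,\dots,v_n$ and let $\{v_i,v_j\}$ be a pair of vertices of order $h$, with associated vector $S=(s_1,\dots,s_n)^t$ (so $M(G)S=hE_{ij}$). Then $s_i=\min\{s_\ell:\ell=1,\dots,n\}$ and $s_j=\max\{s_\ell:\ell=1,\dots,n\}$.
   Context: Graphs are finite, connected, may have multiple edges, no loops. Let $c_{ij}$ ($i\neq j$) be the number of edges joining $v_i,v_j$, $c_{ii}=-\sum_{j\ne i}c_{ij}$, $M(G)=(c_{ij})$, and $E_{ij}=e_i-e_j\in\mathbb{Z}^n$. For an integer $h>0$, the pair $\{v_i,v_j\}$ has order $h$ if there exists $S=(s_1,\dots,s_n)^t\in\mathbb{Z}^n$ with $M(G)S=hE_{ij}$ and $\gcd(s_1-s_n,\dots,s_{n-1}-s_n)=1$; such an $S$ is the associated vector. *)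

(* Defs.v *)
From mathcomp Require Import all_boot all_order all_algebra.
Set Implicit Arguments. Unset Strict Implicit. Unset Printing Implicit Defensive.
Import Order.TTheory GRing.Theory Num.Theory.
Local Open Scope ring_scope.

(* A multigraph on vertex set 'I_n.+1 (vertices v_1..v_{n+1} relabelled
   0..n) is given by its edge-multiplicity function c : c u v = number of
   edges joining u and v. *)
Definition is_multigraph n (c : 'I_n.+1 -> 'I_n.+1 -> nat) : Prop :=
  (forall u v, c u v = c v u) /\ (forall u, c u u = 0%N).

Definition adj n (c : 'I_n.+1 -> 'I_n.+1 -> nat) : rel 'I_n.+1 :=
  fun u v => (0 < c u v)%N.

Definition connected_mg n (c : 'I_n.+1 -> 'I_n.+1 -> nat) : Prop :=
  forall u v, connect (adj c) u v.

Definition Mmat n (c : 'I_n.+1 -> 'I_n.+1 -> nat) : 'M[int]_n.+1 :=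
  \matrix_(u, v) (if u == v then - (\sum_(w | w != u) (c u w)%:Z)
                  else (c u v)%:Z).

Definition Evec n (i j : 'I_n.+1) : 'cV[int]_n.+1 :=
  \col_k ((k == i)%:Z - (k == j)%:Z).

Definition gcd_diff n (S : 'cV[int]_n.+1) : int :=
  \big[gcdz/0%Z]_(k : 'I_n.+1 | k != ord_max) (S k 0 - S ord_max 0).

Definition associated_vector n (c : 'I_n.+1 -> 'I_n.+1 -> nat)
    (i j : 'I_n.+1) (h : nat) (S : 'cV[int]_n.+1) : Prop :=
  Mmat c *m S = (h%:Z) *: Evec i j /\ gcd_diff S = 1.

(* Main.v *)
Require Import Defs.
From mathcomp Require Import all_boot all_order all_algebra.
Import Order.TTheory GRing.Theory Num.Theory.
Local Open Scope ring_scope.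

Lemma last_closed (T : finType) (e : rel T) (a : pred T) :
  (forall x y, a x -> e x y -> a y) ->
  forall p x, a x -> path e x p -> a (last x p).
Proof.
move=> cl; elim=> [|y p IH] x ax //= /andP[exy pp].
exact: IH (cl _ _ ax exy) pp.
Qed.

Lemma Mmat_row n (c : 'I_n.+1 -> 'I_n.+1 -> nat) (f : 'cV[int]_n.+1) k :
  (Mmat c *m f) k 0 = \sum_(w | w != k) (c k w)%:Z * (f w 0 - f k 0).
Proof.
rewrite !mxE (bigD1 k) //= mxE eqxx.
under eq_bigr => w /negbTE wk do rewrite mxE eq_sym wk.
under [RHS]eq_bigr => w _ do rewrite mulrBr.
by rewrite sumrB mulNr big_distrl /= addrC.
Qed.

Lemma maxp n (c : 'I_n.+1 -> 'I_n.+1 -> nat) (f : 'I_n.+1 -> int) j :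
  (forall u, c u u = 0%N) -> connected_mg c ->
  (forall k, k != j -> 0 <= \sum_(w | w != k) (c k w)%:Z * (f w - f k)) ->
  forall l, f l <= f j.
Proof.
move=> c0 conn H.
case: (@arg_maxP _ _ 'I_n.+1 j predT f erefl) => k0 _ Hk0.
suff: f k0 <= f j by move=> h l; apply: le_trans (Hk0 l erefl) h.
rewrite leNgt; apply/negP => ltj.
pose a := [pred x | f x == f k0].
have cl : forall x y, a x -> adj c x y -> a y.
  move=> x y /eqP ax axy; have xj : x != j.
    by apply/eqP => xj; move: ltj; rewrite -xj ax ltxx.
  have S0 : \sum_(w | w != x) (c x w)%:Z * (f k0 - f w) = 0.
    apply/eqP; rewrite eq_le; apply/andP; split.
      rewrite -oppr_ge0 -sumrN; apply: le_trans (H x xj) _.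
      by rewrite le_eqVlt; apply/orP; left; apply/eqP; apply: eq_bigr => w _;
         rewrite ax -mulrN opprB.
    by apply: sumr_ge0 => w _; rewrite mulr_ge0 // subr_ge0; exact: Hk0.
  have yx : y != x by apply/eqP => yx; move: axy; rewrite /adj yx c0.
  have nn : forall w, w != x -> 0 <= (c x w)%:Z * (f k0 - f w).
    by move=> w _; rewrite mulr_ge0 // subr_ge0; exact: Hk0.
  have := psumr_eq0P nn S0 yx.
  move=> /eqP; rewrite mulf_eq0 subr_eq0 => /orP[|/eqP E].
  - move=> /eqP [] E; move: axy; rewrite /adj /= => H0; exfalso; move: H0; case: (c x y) E => // ? //.
  - by rewrite /a /= E.
have /connectP[p pp jE] := conn k0 j.
have := @last_closed _ _ _ cl p k0.
rewrite -jE /a /= eqxx => /(_ erefl pp) /eqP E; move: ltj; by rewrite E ltxx.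
Qed.

Theorem lemma1p1 (n : nat) (c : 'I_n.+1 -> 'I_n.+1 -> nat)
  (i j : 'I_n.+1) (h : nat) (S : 'cV[int]_n.+1) :
  is_multigraph c -> connected_mg c -> i != j -> (0 < h)%N ->
  associated_vector c i j h S ->
  (forall l : 'I_n.+1, S i 0 <= S l 0) /\ (forall l : 'I_n.+1, S l 0 <= S j 0).
Proof.
move=> [_ c0] conn ij hpos [MS _]; split.
- move=> l; suff : (- S) l 0 <= (- S) i 0 by rewrite !mxE lerN2.
  apply: (@maxp n c (fun l => (- S) l 0) i c0 conn) => k ki.
  rewrite -Mmat_row mulmxN MS !mxE (negbTE ki) /=.
  by rewrite sub0r mulrN opprK mulr_ge0.
- move=> l; apply: (@maxp n c (fun l => S l 0) j c0 conn) => k kj.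
  rewrite -Mmat_row MS !mxE (negbTE kj) /= subr0.
  by rewrite mulr_ge0.
Qed.
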